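(* (i) For all $d\ge 0$, $1\le r\le d+1$ and $0\le j\le\lfloor (d-2)/2\rfloor$: $A(d+1,j,r)\le A(d+1,d-1-j,r)$. (ii) For all $d\ge1$ and $1\le r\le d$: $$A(d+1,0,r+1)\le A(d+1,1,r+1)\le\dots\le A(d+1,\lfloor d/2\rfloor,r+1)$$ and $$A(d+1,d,r+1)\le A(d+1,d-1,r+1)\le\dots\le A(d+1,\lceil d/2\rceil,r+1).$$
   Context: $S_d$ is the symmetric group on $[d]=\{1,\dots,d\}$. For $\sigma\in S_d$, its descent set is $D(\sigma)=\{i\in[d-1]:\sigma(i)>\sigma(i+1)\}$ and $\mathrm{des}(\sigma)=\#D(\sigma)$. For $0\le i\le d-1$ and $1\le j\le d$, $A(d,i,j)=\#\{\sigma\in S_d:\mathrm{des}(\sigma)=i,\ \sigma(1)=j\}$. *)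

(* Defs.v *)
From mathcomp Require Import all_boot all_fingroup.
Set Implicit Arguments. Unset Strict Implicit. Unset Printing Implicit Defensive.

(* A permutation sigma of [d] = {1..d} is modelled by s : 'S_d acting on
   'I_d = {0..d-1}; sigma(i) = (s (i-1)) + 1. *)

Definition pword d (s : 'S_d) : seq nat := [seq (val (s x)).+1 | x <- enum 'I_d].

Definition descents d (s : 'S_d) : seq nat :=
  [seq i <- iota 1 d.-1 | nth 0 (pword s) i.-1 > nth 0 (pword s) i].

Definition des d (s : 'S_d) : nat := size (descents s).

(* sigma(1) (equals 0, i.e. no value in [d], when d = 0) *)
Definition first_val d (s : 'S_d) : nat := head 0 (pword s).

Definition A (d i j : nat) : nat :=
  #|[set s : 'S_d | (des s == i) && (first_val s == j)]|.

(* Main.v *)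
Require Import Defs.
From mathcomp Require Import all_boot all_fingroup.
Set Implicit Arguments. Unset Strict Implicit. Unset Printing Implicit Defensive.

Fixpoint wdes (w : seq nat) : nat :=
  match w with
  | x :: ((y :: _) as t) => (y < x) + wdes t
  | _ => 0
  end.

Lemma size_desc_wdes (w : seq nat) :
  size [seq i <- iota 1 (size w).-1 | nth 0 w i.-1 > nth 0 w i] = wdes w.
Proof.
elim: w => [|x t IH] //.
case: t IH => [|y t] IH //.
have -> : wdes [:: x, y & t] = (y < x) + wdes (y :: t) by [].
rewrite -IH.
have -> : iota 1 (size [:: x, y & t]).-1 = 1 :: map (addn 1) (iota 1 (size (y :: t)).-1).
  by rewrite -iotaDl.
rewrite /= filter_map.
have -> : [seq i <- iota 1 (size t) | preim (addn 1) (fun i => nth 0 [:: x, y & t] i < nth 0 [:: x, y & t] i.-1) i]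
   = [seq i <- iota 1 (size t) | nth 0 [:: y & t] i < nth 0 [:: y & t] i.-1].
  apply: eq_in_filter => k; rewrite mem_iota => /andP[k1 _] /=.
  by case: k k1 => [|k].
by case: (y < x); rewrite /= size_map.

Qed.

Lemma des_wdes d (s : 'S_d) : des s = wdes (pword s).
Proof.
rewrite /des /descents -size_desc_wdes; congr (size (filter _ (iota _ _))).
by rewrite /pword size_map size_enum_ord.
Qed.

Lemma wdes_cons x w :
  wdes (x :: w) = (if w is y :: _ then y < x else false) + wdes w.
Proof. by case: w. Qed.

Lemma wdes_map (f : nat -> nat) w : (forall a b, (f a < f b) = (a < b)) ->
  wdes (map f w) = wdes w.
Proof.
move=> Hf; elim: w => [|x t IH] //.
case: t IH => [|y t] IH //.
have E : forall z u, wdes [:: z, y & u] = (y < z) + wdes (y :: u) by [].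
by rewrite map_cons E -IH /= Hf.
Qed.

Lemma pword_lift n (v : 'I_n.+1) (s : 'S_n) :
  pword (lift_perm ord0 v s) = v.+1 :: map (fun u => u + (v < u)) (pword s).
Proof.
rewrite /pword enum_ordSl /= lift_perm_id -map_comp; congr (_ :: _).
rewrite -map_comp; apply: eq_map => x /=.
rewrite lift_perm_lift /= /bump ltnS addSn addnC; congr (_.+1).
Qed.

Lemma first_lift n (v : 'I_n.+1) (s : 'S_n) : first_val (lift_perm ord0 v s) = v.+1.
Proof. by rewrite /first_val pword_lift. Qed.

Lemma des_lift n (v : 'I_n.+2) (s : 'S_n.+1) :
  des (lift_perm ord0 v s) = (first_val s <= v) + des s.
Proof.
rewrite !des_wdes pword_lift /first_val.
have Hf : forall a b, (a + (v < a) < b + (v < b)) = (a < b).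
  move=> a b; case: (ltnP v a) => Ha; case: (ltnP v b) => Hb;
    rewrite ?addn0 ?addn1 ?ltnS //.
  - have F1 : b <= a := leq_trans Hb (ltnW Ha).
    by rewrite ltnNge (leq_trans F1 (leqnSn a)) ltnNge F1.
  - have F : a < b := leq_ltn_trans Ha Hb.
    by rewrite F (ltnW F).
have Hs : size (pword s) = n.+1 by rewrite /pword size_map size_enum_ord.
case: (pword s) Hs => [|u w] // _.
have Hu : (u + (v < u) < v.+1) = (u <= v).
  case: (ltnP v u) => H; rewrite ?addn0 ?addn1 ?ltnS //.
  by rewrite ltnNge ltnW.
rewrite map_cons (wdes_cons v.+1) Hu.
by rewrite (_ : u + (v < u) :: _ = map (fun u => u + (v < u)) (u :: w)) // (wdes_map _ Hf).
Qed.


Lemma first_val_S n (s : 'S_n.+1) : first_val s = (s ord0).+1.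
Proof. by rewrite /first_val /pword enum_ordSl. Qed.

Definition phi n (p : 'I_n.+1 * 'S_n) : 'S_n.+1 := lift_perm ord0 p.1 p.2.

Lemma phi_bij n : bijective (@phi n).
Proof.
apply: inj_card_bij.
  move=> [v s] [w t] /= E.
  have Evw : v = w.
    by move: (congr1 (fun u : 'S_n.+1 => u ord0) E); rewrite /phi /= !lift_perm_id.
  subst w; congr (_, _); apply/permP => x.
  move: (congr1 (fun u : 'S_n.+1 => u (lift ord0 x)) E).
  by rewrite /phi /= !lift_perm_lift => /lift_inj.
by rewrite card_prod card_ord !card_Sn factS.
Qed.

Lemma A_card d i j : A d i j = \sum_(s : 'S_d | (des s == i) && (first_val s == j)) 1.
Proof. by rewrite /A sum1dep_card. Qed.

Lemma A_rec n i j : 1 <= j <= n.+2 ->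
  A n.+2 i j = \sum_(k < n.+1)
     (if k.+1 < j then (if i is i'.+1 then A n.+1 i' k.+1 else 0) else A n.+1 i k.+1).
Proof.
move=> /andP[j1 j2].
rewrite A_card (reindex (@phi n.+1)); last by apply: onW_bij; apply: phi_bij.
rewrite /phi.
under eq_bigl => p do rewrite des_lift first_lift.
rewrite (eq_bigl (fun p : 'I_n.+2 * 'S_n.+1 => (p.1.+1 == j) && ((first_val p.2 <= p.1) + des p.2 == i))); last first.
  by move=> p; rewrite andbC.
rewrite -(pair_big_dep (fun v : 'I_n.+2 => v.+1 == j)
           (fun v (s : 'S_n.+1) => (first_val s <= v) + des s == i) (fun _ _ => 1)) /=.
rewrite (big_pred1 (inord j.-1)); last first.
  move=> v /=; rewrite -val_eqE /= inordK; last by case: j j1 j2.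
  by case: j j1 j2 => // j _ _; rewrite eqSS.
rewrite (partition_big (fun s : 'S_n.+1 => s ord0) xpredT) //=.
apply: eq_bigr => k _.
rewrite inordK; last by case: j j1 j2.
have Hkj : (k.+1 <= j.-1) = (k.+1 < j) by case: j j1 j2.
case: ifP => Hk.
- case: i => [|i].
  + apply: big_pred0 => s; case: (eqVneq (s ord0) k) => [Hs|Hs]; last by rewrite andbF.
    by rewrite first_val_S Hs Hkj Hk.
  + rewrite A_card; apply: eq_bigl => s.
    rewrite first_val_S.
    case: (eqVneq (s ord0) k) => [->|Hs]; last by rewrite andbF eqSS (inj_eq val_inj) (negbTE Hs) andbF.
    by rewrite Hkj Hk add1n eqSS !eqxx !andbT.
- rewrite A_card; apply: eq_bigl => s.
  rewrite first_val_S.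
  case: (eqVneq (s ord0) k) => [->|Hs]; last by rewrite andbF eqSS (inj_eq val_inj) (negbTE Hs) andbF.
  by rewrite Hkj Hk add0n !eqxx !andbT.
Qed.

Lemma des_le d (s : 'S_d) : des s <= d.-1.
Proof.
rewrite /des /descents size_filter.
by apply: leq_trans (count_size _ _) _; rewrite size_iota.
Qed.

Lemma A_supp d i j : d.-1 < i -> A d i j = 0.
Proof.
move=> H; rewrite A_card big_pred0 // => s.
by rewrite (_ : des s == i = false) // ; apply/negbTE; rewrite neq_ltn (leq_ltn_trans (des_le s) H).
Qed.

Lemma A_row1 i j : A 1 i j = ((i == 0) && (j == 1)).
Proof.
have Hs : forall s : 'S_1, pword s = [:: 1].
  move=> s; rewrite /pword enum_ordSl (size0nil (size_enum_ord 0)) /=.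
  by case: (s ord0) => [[]].
rewrite A_card.
under eq_bigl => s do rewrite /first_val des_wdes Hs /=.
rewrite ![0 == i]eq_sym ![1 == j]eq_sym.
case: (i == 0); case: (j == 1) => /=; try by rewrite big_pred0.
by rewrite sum1dep_card (_ : [set x : 'S_1 | true] = setT) ?cardsT ?card_Sn //; apply/setP => x; rewrite !inE.
Qed.

Require Import Stdlib.micromega.Lia.


Ltac tonat := repeat match goal with
 | H : is_true (leq _ _) |- _ => move/leP: H => H
 | H : is_true (_ && _) |- _ => let H1 := fresh H in let H2 := fresh H in case/andP: H => H1 H2
 end.
Ltac undbl := repeat match goal with
 | H : context[double ?x] |- _ => rewrite -(addnn x) in H
 | |- context[double ?x] => rewrite -(addnn x)
 end.
Ltac nlia := undbl; tonat; try apply/leP; unfold addn, addn_rec, subn, subn_rec, muln, muln_rec in *; lia.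

Ltac nl := (try (apply/andP; split)); nlia.

Definition sh (f : nat -> nat) i := if i is i'.+1 then f i' else 0.

Definition SU N (f : nat -> nat) :=
  [/\ forall i, N <= i -> f i = 0,
      forall i, i < N -> f i = f (N.-1 - i)
    & forall i j, i <= j -> i + j < N -> f i <= f j].

Lemma SU_ext N f g : f =1 g -> SU N f -> SU N g.
Proof.
move=> E [H1 H2 H3]; split => [i Hi|i Hi|i j Hij Hs]; rewrite -!E.
- exact: H1.
- exact: H2.
- exact: H3.
Qed.

Lemma SU0 N : SU N (fun=> 0).
Proof. by split. Qed.

Lemma SU_add N f g : SU N f -> SU N g -> SU N (fun i => f i + g i).
Proof.
move=> [F1 F2 F3] [G1 G2 G3]; split => [i Hi|i Hi|i j Hij Hs].
- by rewrite F1 // G1.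
- by rewrite F2 // G2.
- by apply: leq_add; [apply: F3 | apply: G3].
Qed.

Lemma SU_sum N (I : eqType) (r : seq I) (P : pred I) (F : I -> nat -> nat) :
  (forall k, k \in r -> P k -> SU N (F k)) -> SU N (fun i => \sum_(k <- r | P k) F k i).
Proof.
elim: r => [|x r IH] H.
  by apply: SU_ext (SU0 N) => i; rewrite big_nil.
have IH' : SU N (fun i => \sum_(k <- r | P k) F k i).
  by apply: IH => k kr; apply: H; rewrite inE kr orbT.
case Px: (P x).
  by apply: SU_ext (SU_add (H x (mem_head _ _) Px) IH') => i; rewrite big_cons Px.
by apply: SU_ext IH' => i; rewrite big_cons Px.
Qed.

Lemma SU_half N f : SU N (fun i => f i + f i) -> SU N f.
Proof.
move=> [F1 F2 F3]; split => [i Hi|i Hi|i j Hij Hs].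
- by move: (F1 i Hi); rewrite addnn => /eqP; rewrite double_eq0 => /eqP.
- by apply: double_inj; rewrite -!addnn F2.
- by rewrite -leq_double -!addnn F3.
Qed.

Lemma SU_1t N f : SU N f -> SU N.+1 (fun i => f i + sh f i).
Proof.
move=> [F1 F2 F3]; split => [i Hi|i Hi|i j Hij Hs] /=.
- rewrite F1; last by nlia.
  case: i Hi => [|i] Hi /=; rewrite // F1 //; nlia.
- rewrite addnC; congr (_ + _).
  + case: i Hi => [|i] Hi /=.
      by rewrite subn0 F1.
    rewrite F2; last by nlia.
    congr f; nlia.
  + have [HiN|HiN] := ltnP i N.
      rewrite F2 //. case E: (N - i) => [|m] /=; first by nlia.
      congr f; nlia.
    have -> : i = N by nlia.
    by rewrite subnn /= F1.
- have [Hlt|Hge] := ltnP (i + j) N.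
    apply: leq_add; first by apply: F3.
    case: i Hij Hs Hlt => [|i] Hij Hs Hlt //=.
    case: j Hij Hs Hlt => [|j] Hij Hs Hlt //=.
    apply: F3; nlia.
  case: i Hij Hs Hge => [|i] Hij Hs Hge /=.
    case: N F1 F2 F3 Hs Hge => [|N] F1 F2 F3 Hs Hge.
      by have -> : j = 0 by nlia.
    have -> : j = N.+1 by nlia.
    rewrite /= (F1 N.+1) // (F2 N) // /= subnn.
    by rewrite addn0 add0n.
  case: j Hij Hs Hge => [|j] Hij Hs Hge /=; first by nlia.
  rewrite addnC; apply: eq_leq; congr (_ + _).
  + rewrite (F2 j.+1); last by nlia. congr f; nlia.
  + rewrite (F2 j); last by nlia. congr f; nlia.
Qed.

Lemma SU_sh2 N f : SU N f -> SU N.+2 (sh f).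
Proof.
move=> [F1 F2 F3]; split => [i Hi|i Hi|i j Hij Hs] /=.
- case: i Hi => [|i] Hi //=; apply: F1; nlia.
- case: i Hi => [|i] Hi /=.
    by rewrite F1.
  have [HiN|HiN] := ltnP i N.
    have -> : N.+1 - i.+1 = (N - i.+1).+1 by nlia.
    rewrite /= F2; last by nlia.
    congr f; nlia.
  have -> : N.+1 - i.+1 = 0 by nlia.
  by rewrite F1.
- case: i Hij Hs => [|i] Hij Hs //=.
  case: j Hij Hs => [|j] Hij Hs //=.
  apply: F3; nlia.
Qed.

Lemma sum_rev (F : nat -> nat) a b c : a <= b -> b <= c.+1 ->
  \sum_(a <= k < b) F k = \sum_(c.+1 - b <= k < c.+1 - a) F (c - k).
Proof.
move=> Hab; elim: b Hab => [|b IH] Hab Hbc.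
  have -> : a = 0 by nlia.
  by rewrite !big_geq.
have [Hab'|Hab'] := leqP a b; last first.
  have -> : a = b.+1 by nlia.
  by rewrite !big_geq.
rewrite big_nat_recr //= IH //; last by nlia.
rewrite (@big_ltn _ _ _ (c.+1 - b.+1)); last by nlia.
have -> : (c.+1 - b.+1).+1 = c.+1 - b by nlia.
have -> : c - (c.+1 - b.+1) = b by nlia.
by rewrite addnC.
Qed.

Lemma A_rec2 n i j : 0 < n -> 1 <= j <= n.+1 ->
  A n.+1 i j = sh (fun i => \sum_(1 <= k < j) A n i k) i + \sum_(j <= k < n.+1) A n i k.
Proof.
case: n => [|n] // _ Hj.
rewrite A_rec //.
have -> : \sum_(k < n.+1) (if k.+1 < j then (if i is i'.+1 then A n.+1 i' k.+1 else 0) else A n.+1 i k.+1)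
   = \sum_(1 <= k < n.+2) (if k < j then (if i is i'.+1 then A n.+1 i' k else 0) else A n.+1 i k).
  by rewrite big_add1 /= big_mkord.
case/andP: Hj => Hj1 Hj2.
rewrite (@big_cat_nat _ _ _ j 1 n.+2) //=.
congr (_ + _).
- rewrite (eq_big_nat _ _ (F2 := fun k => if i is i'.+1 then A n.+1 i' k else 0)); last first.
    by move=> k /andP[_ ->].
  case: i => [|i] /=; last by [].
  by rewrite big1.
- apply: eq_big_nat => k /andP[Hk _].
  by rewrite ltnNge Hk.
Qed.


Definition Crow m := forall i j, 1 <= j <= m -> i < m ->
  A m i j = A m (m.-1 - i) (m.+1 - j).

Definition Drow m := forall j, m < j.*2 -> j <= m ->
  exists a b, [/\ SU m a, SU m.-1 b & forall i, A m i j = a i + sh b i].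

Lemma Crow1 : Crow 1.
Proof.
move=> i j /andP[H1 H2] Hi.
have -> : j = 1 by nlia.
by have -> : i = 0 by nlia.
Qed.

Lemma Drow1 : Drow 1.
Proof.
move=> j H1 H2.
have -> : j = 1 by nlia.
exists (fun i => (i == 0) : nat), (fun=> 0); split.
- split => [i Hi|i Hi|i k Hik Hs].
  + by case: i Hi.
  + by case: i Hi.
  + by case: i Hik Hs => [|i] //; case: k.
- exact: SU0.
- by move=> i; rewrite A_row1 andbT; case: i.
Qed.

Lemma Crow_step n : Crow n.+1 -> Crow n.+2.
Proof.
move=> C i j /andP[Hj1 Hj2] Hi.
rewrite /= !A_rec2 //; try by apply/andP; split; nlia.
rewrite addnC; congr (_ + _).
- have [Hin|Hin] := ltnP i n.+1.
    have -> : n.+1 - i = (n - i).+1 by nlia.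
    rewrite /= (@sum_rev _ j n.+2 n.+2) //.
    have -> : n.+3 - n.+2 = 1 by nlia.
    apply: eq_big_nat => k /andP[Hk1 Hk2].
    rewrite C; try by nl.
    congr (A _ _ _); nlia.
  have -> : n.+1 - i = 0 by nlia.
  rewrite /= big1_seq // => k _; rewrite A_supp //; nlia.
- case: i Hi => [|i] Hi /=.
    rewrite subn0 big1_seq // => k _; rewrite A_supp //.
  rewrite (@sum_rev _ (n.+3 - j) n.+2 n.+2) //; try nlia.
  have -> : n.+3 - (n.+3 - j) = j by nlia.
  have -> : n.+3 - n.+2 = 1 by nlia.
  apply: eq_big_nat => k /andP[Hk1 Hk2].
  rewrite C; try by nl.
  congr (A _ _ _); nlia.
Qed.

Lemma rev_dec n' a b (F : nat -> nat) : SU n'.+1 a -> SU n' b ->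
  (forall i, F i = a i + sh b i) -> forall i, i < n'.+1 -> F (n' - i) = a i + b i.
Proof.
move=> [A1 A2 A3] [B1 B2 B3] EF i Hi.
rewrite EF; congr (_ + _); first by rewrite (A2 i).
have [Hin|Hin] := ltnP i n'.
  have -> : n' - i = (n'.-1 - i).+1 by nlia.
  by rewrite /= (B2 i).
have -> : n' - i = 0 by nlia.
by rewrite B1.
Qed.

Lemma rev_col n' k a b : Crow n'.+1 -> 1 <= k <= n'.+1 ->
  SU n'.+1 a -> SU n' b -> (forall i, A n'.+1 i k = a i + sh b i) ->
  forall i, A n'.+1 i (n'.+2 - k) = a i + b i.
Proof.
move=> C Hk Ha Hb E i.
have [Hi|Hi] := ltnP i n'.+1.
  rewrite C; try by nl.
  have -> : n'.+2 - (n'.+2 - k) = k by nl.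
  exact: (rev_dec Ha Hb E).
case: Ha => [A1 _ _]; case: Hb => [B1 _ _].
rewrite A_supp // A1 // B1 //; nlia.
Qed.

Lemma h_SU n' k : Crow n'.+1 -> Drow n'.+1 -> 1 <= k <= n'.+1 ->
  SU n'.+1 (fun i => A n'.+1 i k + A n'.+1 i (n'.+2 - k)).
Proof.
move=> C D.
suff H : forall k, n'.+1 < k.*2 -> k <= n'.+1 ->
     SU n'.+1 (fun i => A n'.+1 i k + A n'.+1 i (n'.+2 - k)).
  move=> Hk; have [Hl|Hl] := ltnP n'.+1 k.*2; first by apply: H => //; nl.
  apply: SU_ext (H (n'.+2 - k) _ _); try nl.
  by move=> i; rewrite addnC; have -> : n'.+2 - (n'.+2 - k) = k by nl.
move=> {}k H1 H2.
have [a [b [Ha Hb E]]] := D k H1 H2.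
have E2 := rev_col C (_ : 1 <= k <= n'.+1) Ha Hb E.
apply: SU_ext (SU_add (SU_add Ha Ha) (SU_1t Hb)) => i.
rewrite E E2 //=; first by nlia.
by nl.
Qed.

Lemma g_SU n' k : Crow n'.+1 -> Drow n'.+1 -> n'.+1 < k.*2 -> k <= n'.+1 ->
  SU n'.+2 (fun i => A n'.+1 i k + sh (fun i => A n'.+1 i (n'.+2 - k)) i).
Proof.
move=> C D H1 H2.
have [a [b [Ha Hb E]]] := D k H1 H2.
have E2 := rev_col C (_ : 1 <= k <= n'.+1) Ha Hb E.
apply: SU_ext (SU_add (SU_1t Ha) (SU_add (SU_sh2 Hb) (SU_sh2 Hb))) => i.
case: i => [|i] /=; rewrite E.
  by rewrite /= !addn0.
rewrite E2 /=; last by nl.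
nlia.
Qed.

Lemma Drow_step n' : Crow n'.+1 -> Drow n'.+1 -> Drow n'.+2.
Proof.
move=> C D j H1 H2.
exists (fun i => \sum_(j <= k < n'.+2) (A n'.+1 i k + sh (fun i => A n'.+1 i (n'.+2 - k)) i)).
exists (fun i => \sum_(n'.+3 - j <= k < j) A n'.+1 i k).
split.
- apply: SU_sum => k; rewrite mem_index_iota => Hk _.
  apply: g_SU => //; nl.
- apply: SU_half.
  have HS := SU_sum (r := index_iota (n'.+3 - j) j) (P := xpredT)
     (F := fun k i => A n'.+1 i k + A n'.+1 i (n'.+2 - k)) (N := n'.+1).
  apply: SU_ext (HS _) => [i|k]; last first.
    rewrite mem_index_iota => Hk _; apply: h_SU => //; nl.
  rewrite big_split /=; congr (_ + _).
  rewrite [RHS](@sum_rev _ (n'.+3 - j) j n'.+2); try nl.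
  by have -> : n'.+3 - (n'.+3 - j) = j by nl.
- move=> i; rewrite A_rec2 //; last by nl.
  rewrite big_split /= addnC -addnA; congr (_ + _).
  case: i => [|i] /=.
    by rewrite big1 // => k _.
  rewrite (@big_cat_nat _ _ _ (n'.+3 - j) 1 j) //=; try nl.
  congr (_ + _).
  rewrite (@sum_rev _ j n'.+2 n'.+2); try nl.
  have -> : n'.+3 - n'.+2 = 1 by nl.
  apply: eq_big_nat => k Hk; congr (A _ _ _); nl.
Qed.

Lemma rows n' : Crow n'.+1 /\ Drow n'.+1.
Proof.
elim: n' => [|n' [C D]]; first by split; [exact: Crow1 | exact: Drow1].
by split; [exact: Crow_step | exact: Drow_step].
Qed.

Lemma col_dec d r : 1 <= r <= d.+1 -> exists a b, [/\ SU d.+1 a, SU d b &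
  (forall i, A d.+1 i r = a i + sh b i) \/ (forall i, i < d.+1 -> A d.+1 i r = a i + b i)].
Proof.
move=> Hr; have [C D] := rows d.
have [Hl|Hl] := ltnP d.+1 r.*2.
  have Hr2 : r <= d.+1 by nl.
  have [a [b [Ha Hb E]]] := D r Hl Hr2.
  by exists a, b; split => //; left.
have H1 : d.+1 < (d.+2 - r).*2 by nl.
have H2 : d.+2 - r <= d.+1 by nl.
have [a [b [Ha Hb E]]] := D (d.+2 - r) H1 H2.
exists a, b; split => //; right => i Hi.
rewrite C //; first exact: (rev_dec Ha Hb E).
Qed.

Theorem corollary4p4 :
  (forall d r j, 1 <= r <= d.+1 -> j.*2 + 2 <= d ->
     A d.+1 j r <= A d.+1 (d - 1 - j) r)
  /\
  (forall d r, 1 <= d -> 1 <= r <= d ->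
     (forall k, k < d./2 -> A d.+1 k r.+1 <= A d.+1 k.+1 r.+1) /\
     (forall k, uphalf d < k <= d -> A d.+1 k r.+1 <= A d.+1 k.-1 r.+1)).
Proof.
split.
- move=> d r j Hr Hj.
  have [a [b [[A1 A2 A3] [B1 B2 B3] [E|E]]]] := col_dec Hr.
  + rewrite !E; apply: leq_add; first by apply: A3; nlia.
    case: j Hj => [|j] Hj //=.
    have -> : d - 1 - j.+1 = (d - 3 - j).+1 by nlia.
    apply: B3; nlia.
  + rewrite !E; try nlia.
    by apply: leq_add; [apply: A3 | apply: B3]; nlia.
- move=> d r Hd Hr.
  have Hr' : 1 <= r.+1 <= d.+1 by nl.
  have [a [b [[A1 A2 A3] [B1 B2 B3] [E|E]]]] := col_dec Hr'; split.
  + move=> k Hk; rewrite geq_half_double in Hk.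
    rewrite !E; apply: leq_add; first by apply: A3; nlia.
    case: k Hk => [|k] Hk //=.
    apply: B3; nlia.
  + move=> k /andP[Hk1 Hk2]; rewrite ltn_uphalf_double in Hk1.
    case: k Hk1 Hk2 => [|k] Hk1 Hk2 /=; first by nlia.
    rewrite !E; apply: leq_add.
      rewrite (A2 k.+1); last by nlia.
      rewrite (A2 k); last by nlia.
      apply: A3; nlia.
    case: k Hk1 Hk2 => [|k] Hk1 Hk2 /=; first by nlia.
    rewrite (B2 k.+1); last by nlia.
    rewrite (B2 k); last by nlia.
    apply: B3; nlia.
  + move=> k Hk; rewrite geq_half_double in Hk.
    rewrite !E; try nlia.
    by apply: leq_add; [apply: A3 | apply: B3]; nlia.
  + move=> k /andP[Hk1 Hk2]; rewrite ltn_uphalf_double in Hk1.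
    case: k Hk1 Hk2 => [|k] Hk1 Hk2 /=; first by nlia.
    rewrite !E; try nlia.
    apply: leq_add.
      rewrite (A2 k.+1); last by nlia.
      rewrite (A2 k); last by nlia.
      apply: A3; nlia.
    have [Hkd|Hkd] := ltnP k.+1 d.
      rewrite (B2 k.+1); last by nlia.
      rewrite (B2 k); last by nlia.
      apply: B3; nlia.
    by rewrite B1.
Qed.
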